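(* Suppose $(\varepsilon,\beta,\gamma;(12))\in\mathrm{Par}(n)$. Let $b$ and $c$ be the orders of $\beta$ and $\gamma$ as elements of $\mathcal S_n$. Then $c\mid 2b$, and if $c$ is odd then $c=b$.
   Context: A Latin square of order $n$ is an $n\times n$ array with rows, columns and symbols indexed by $[n]$, each symbol occurring once in each row and each column, with triple set $O(L)=\{(i,j,L(i,j))\}$. Permutations act on the right; $\varepsilon$ is the identity. A paratopism $(\alpha,\beta,\gamma;(12))$ with $\alpha,\beta,\gamma\in\mathcal S_n$ maps $L$ to $L^\sigma$ with triple set $\{(y\beta,x\alpha,z\gamma):(x,y,z)\in O(L)\}$; it is an autoparatopism of $L$ if $L^\sigma=L$. $\mathrm{Par}(n)$ denotes the set of paratopisms that are autoparatopisms of at least one Latin square of order $n$. *)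

(* Defs.v *)
From mathcomp Require Import all_boot all_order all_fingroup.
Set Implicit Arguments. Unset Strict Implicit. Unset Printing Implicit Defensive.
Local Open Scope group_scope.

Definition latin_square (n : nat) (L : 'I_n -> 'I_n -> 'I_n) : Prop :=
  (forall i, injective (L i)) /\ (forall j, injective (fun i => L i j)).

Definition triples (n : nat) (L : 'I_n -> 'I_n -> 'I_n) : {set 'I_n * 'I_n * 'I_n} :=
  [set t | t.2 == L t.1.1 t.1.2].

(* Image of L under the paratopism (alpha, beta, gamma; (12)):
   triple set {(y beta, x alpha, z gamma) : (x,y,z) in O(L)}.
   Permutations act on the right: x alpha is written (alpha x) here. *)
Definition para12_image (n : nat) (a b c : {perm 'I_n}) (L : 'I_n -> 'I_n -> 'I_n)
  : {set 'I_n * 'I_n * 'I_n} :=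
  [set ((b t.1.2, a t.1.1), c t.2) | t in triples L].

Definition is_autoparatopism12 (n : nat) (a b c : {perm 'I_n})
  (L : 'I_n -> 'I_n -> 'I_n) : Prop :=
  para12_image a b c L = triples L.

Definition in_Par12 (n : nat) (a b c : {perm 'I_n}) : Prop :=
  exists L : 'I_n -> 'I_n -> 'I_n, latin_square L /\ is_autoparatopism12 a b c L.

(* Main.v *)
Require Import Defs.
From mathcomp Require Import all_boot all_order all_fingroup.
From mathcomp Require Import cyclic.
Set Implicit Arguments. Unset Strict Implicit. Unset Printing Implicit Defensive.

Lemma apS n (g : {perm 'I_n}) k z : ((g ^+ k.+1)%g) z = g (((g ^+ k)%g) z).
Proof. by rewrite expgSr permM. Qed.

Theorem theorem4p1 (n : nat) (beta gamma : {perm 'I_n}) :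
  in_Par12 1%g beta gamma ->
  (#[gamma]%g %| 2 * #[beta]%g)%N /\ (odd #[gamma]%g -> #[gamma]%g = #[beta]%g).
Proof.
Open Scope group_scope.
case=> L [[Hr Hc] HP].
have H : forall x y, gamma (L x y) = L (beta y) x.
  move=> x y.
  have : ((beta y, (1 : {perm 'I_n}) x), gamma (L x y)) \in para12_image 1 beta gamma L.
    by apply/imsetP; exists ((x, y), L x y) => //; rewrite inE.
  by rewrite HP inE /= perm1 => /eqP.
have It : forall k x y, (gamma ^+ (2 * k)) (L x y) = L ((beta ^+ k) x) ((beta ^+ k) y).
  elim=> [|k IH] x y; first by rewrite !expg0 !perm1.
  by rewrite mulnS (_ : 2 + 2 * k = (2 * k).+2)%N // !apS IH !H.
have sur : forall z, exists x y, L x y = z.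
  move=> z; exists z; exists ((perm (Hr z))^-1 z).
  by rewrite -[L z _](permE (Hr z)) permKV.
have P1 : (#[gamma] %| 2 * #[beta])%N.
  rewrite order_dvdn; apply/eqP/permP => z; case: (sur z) => x [y <-].
  by rewrite It expg_order !perm1.
split=> // Hodd.
have [m Hm] : exists m, #[gamma] = (2 * m).+1.
  exists (#[gamma]./2); rewrite -[in LHS](odd_double_half #[gamma]) Hodd.
  by rewrite -mul2n.
have E : forall x y, L ((beta ^+ m.+1) y) ((beta ^+ m) x) = L x y.
  move=> x y; rewrite apS -H -It -apS -Hm.
  by rewrite expg_order perm1.
have P2 : (#[beta] %| #[gamma])%N.
  rewrite order_dvdn; apply/eqP/permP => x; rewrite perm1.
  set y := ((beta ^+ m.+1)^-1) x.
  have := E x y; rewrite /y permKV => /Hr Hy.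
  by rewrite Hm (_ : (2 * m).+1 = m + m.+1)%N ?expgD ?permM ?Hy ?permKV // mul2n -addnn addnS.
apply/eqP; rewrite eqn_dvd P2 andbT.
by rewrite -(@Gauss_dvdr _ 2) // ?coprimen2 ?Hodd // mulnC.
Qed.
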